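(* Let $\mathcal A$ be a unital C*-subalgebra of $l^\infty(\mathbb N)$ with maximal ideal space $X$ (weak* topology), and let $\iota:\mathbb N\to X$ be given by $\iota(n)(f)=f(n)$ for $f\in\mathcal A$. Then $\mathcal A$ is invariant under $\sigma_A$ (i.e. is an anqie) if and only if the map $\iota(n)\mapsto\iota(n+1)$ on $\iota(\mathbb N)$ extends to a continuous map from $X$ to $X$.
   Context: $\mathbb N=\{0,1,2,\ldots\}$ and $l^\infty(\mathbb N)$ is the C*-algebra of bounded complex-valued functions on $\mathbb N$; $\sigma_A:l^\infty(\mathbb N)\to l^\infty(\mathbb N)$ is $(\sigma_Af)(n)=f(n+1)$. An anqie is a unital C*-subalgebra of $l^\infty(\mathbb N)$ invariant under $\sigma_A$. The maximal ideal space of $\mathcal A$ is identified with the space of multiplicative states (nonzero characters) of $\mathcal A$. *)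

(* Defs.v *)
From Stdlib Require Import Reals List.
Open Scope R_scope.

Record Cplx : Type := mkC { Re : R; Im : R }.
Definition C0 : Cplx := mkC 0 0.
Definition C1 : Cplx := mkC 1 0.
Definition Cadd (z w : Cplx) : Cplx := mkC (Re z + Re w) (Im z + Im w).
Definition Copp (z : Cplx) : Cplx := mkC (- Re z) (- Im z).
Definition Csub (z w : Cplx) : Cplx := Cadd z (Copp w).
Definition Cmul (z w : Cplx) : Cplx :=
  mkC (Re z * Re w - Im z * Im w) (Re z * Im w + Im z * Re w).
Definition Cconj (z : Cplx) : Cplx := mkC (Re z) (- Im z).
Definition Cmod (z : Cplx) : R := sqrt (Re z * Re z + Im z * Im z).

(** Elements of l^infty(N) are bounded functions nat -> Cplx. *)
Definition bounded (f : nat -> Cplx) : Prop :=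
  exists M : R, forall n, Cmod (f n) <= M.

Definition shift (f : nat -> Cplx) : nat -> Cplx := fun n => f (S n).

Record unital_Cstar_subalgebra (A : (nat -> Cplx) -> Prop) : Prop := {
  cs_bounded : forall f, A f -> bounded f;
  cs_unit : A (fun _ => C1);
  cs_add : forall f g, A f -> A g -> A (fun n => Cadd (f n) (g n));
  cs_scal : forall (c : Cplx) f, A f -> A (fun n => Cmul c (f n));
  cs_mul : forall f g, A f -> A g -> A (fun n => Cmul (f n) (g n));
  cs_conj : forall f, A f -> A (fun n => Cconj (f n));
  cs_closed : forall f : nat -> Cplx,
      (forall eps, 0 < eps ->
         exists g, A g /\ forall n, Cmod (Csub (f n) (g n)) <= eps) ->
      A f
}.

Definition shift_invariant (A : (nat -> Cplx) -> Prop) : Prop :=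
  forall f, A f -> A (shift f).

(** A point of the maximal ideal space: a nonzero multiplicative
    (complex-)linear functional on A.  Functionals are represented as maps
    (nat -> Cplx) -> Cplx, of which only the values on A matter. *)
Record character (A : (nat -> Cplx) -> Prop) (phi : (nat -> Cplx) -> Cplx) : Prop := {
  ch_add : forall f g, A f -> A g ->
      phi (fun n => Cadd (f n) (g n)) = Cadd (phi f) (phi g);
  ch_scal : forall (c : Cplx) f, A f -> phi (fun n => Cmul c (f n)) = Cmul c (phi f);
  ch_mul : forall f g, A f -> A g ->
      phi (fun n => Cmul (f n) (g n)) = Cmul (phi f) (phi g);
  ch_nonzero : exists f, A f /\ phi f <> C0
}.

Definition iota (n : nat) : (nat -> Cplx) -> Cplx := fun f => f n.

Definition maps_X_to_X (A : (nat -> Cplx) -> Prop)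
    (T : ((nat -> Cplx) -> Cplx) -> ((nat -> Cplx) -> Cplx)) : Prop :=
  forall phi, character A phi -> character A (T phi).

(** The weak* topology on X is the topology
    of pointwise convergence on A, whose basic neighbourhoods of phi are
    { psi in X | |psi g_i - phi g_i| < delta, i = 1..k } for g_1..g_k in A;
    a map into X is continuous iff each psi |-> (T psi)(f), f in A, is. *)
Definition weakstar_continuous (A : (nat -> Cplx) -> Prop)
    (T : ((nat -> Cplx) -> Cplx) -> ((nat -> Cplx) -> Cplx)) : Prop :=
  forall phi, character A phi ->
  forall f, A f ->
  forall eps, 0 < eps ->
  exists (gs : list (nat -> Cplx)) (delta : R),
    0 < delta /\ Forall A gs /\
    forall psi, character A psi ->
      (forall g, In g gs -> Cmod (Csub (psi g) (phi g)) < delta) ->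
      Cmod (Csub (T psi f) (T phi f)) < eps.

(** T extends iota(n) |-> iota(n+1): T(iota n) = iota(n+1) as points of X
    (i.e. as functionals on A). *)
Definition extends_shift (A : (nat -> Cplx) -> Prop)
    (T : ((nat -> Cplx) -> Cplx) -> ((nat -> Cplx) -> Cplx)) : Prop :=
  forall n f, A f -> T (iota n) f = iota (S n) f.

(* Main.v *)
Require Import Defs.
From Stdlib Require Import Reals List.
From Stdlib Require Import Lra Lia Psatz Classical FunctionalExtensionality ClassicalEpsilon.
From mathcomp Require classical_sets filter.
Open Scope R_scope.


Lemma Ceq (z w : Cplx) : Re z = Re w -> Im z = Im w -> z = w.
Proof. destruct z, w; simpl; intros; subst; reflexivity. Qed.

Lemma Cmod_ge0 z : 0 <= Cmod z.
Proof. unfold Cmod; apply sqrt_pos. Qed.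

Lemma sqrt_ge_of_sq (a s : R) : 0 <= s -> a * a <= s -> a <= sqrt s.
Proof.
  intros Hs H. destruct (Rle_or_lt a 0). { pose proof (sqrt_pos s); lra. }
  apply Rle_trans with (sqrt (a*a)). rewrite sqrt_square; lra. apply sqrt_le_1_alt; lra.
Qed.

Lemma sqrt_le_of_sq (a s : R) : 0 <= a -> s <= a * a -> sqrt s <= a.
Proof.
  intros Ha H. destruct (Rle_or_lt s 0).
  { rewrite sqrt_neg_0 by lra. lra. }
  apply Rle_trans with (sqrt (a*a)). apply sqrt_le_1_alt; lra. rewrite sqrt_square; lra.
Qed.

Lemma Cmod_sq z : Cmod z * Cmod z = Re z * Re z + Im z * Im z.
Proof. unfold Cmod. apply sqrt_sqrt. nra. Qed.

Lemma Cmod_real a : Cmod (mkC a 0) = Rabs a.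
Proof.
  unfold Cmod; simpl. replace (a * a + 0 * 0) with (Rsqr a) by (unfold Rsqr; ring).
  apply sqrt_Rsqr_abs.
Qed.


Lemma abs_le_sqrt a b : Rabs a <= sqrt (a * a + b * b).
Proof.
  apply sqrt_ge_of_sq. nra. rewrite <- Rabs_mult. rewrite Rabs_right by nra. nra.
Qed.

Lemma Re_le_Cmod z : Rabs (Re z) <= Cmod z.
Proof. apply abs_le_sqrt. Qed.

Lemma Im_le_Cmod z : Rabs (Im z) <= Cmod z.
Proof. unfold Cmod. rewrite Rplus_comm. apply abs_le_sqrt. Qed.

Lemma Cmod_le_ReIm z : Cmod z <= Rabs (Re z) + Rabs (Im z).
Proof.
  apply sqrt_le_of_sq. pose proof (Rabs_pos (Re z)); pose proof (Rabs_pos (Im z)); lra.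
  pose proof (Rabs_pos (Re z)); pose proof (Rabs_pos (Im z)).
  assert (Rabs (Re z) * Rabs (Re z) = Re z * Re z) by (rewrite <- Rabs_mult; apply Rabs_right; nra).
  assert (Rabs (Im z) * Rabs (Im z) = Im z * Im z) by (rewrite <- Rabs_mult; apply Rabs_right; nra).
  nra.
Qed.

Lemma Cmod_triangle z w : Cmod (Cadd z w) <= Cmod z + Cmod w.
Proof.
  apply sqrt_le_of_sq. pose proof (Cmod_ge0 z); pose proof (Cmod_ge0 w); lra.
  simpl. pose proof (Cmod_sq z) as Hz; pose proof (Cmod_sq w) as Hw.
  pose proof (Cmod_ge0 z); pose proof (Cmod_ge0 w).
  assert (Re z * Re w + Im z * Im w <= Cmod z * Cmod w).
  { apply Rsqr_incr_0_var. 2: nra.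
    unfold Rsqr. replace (Cmod z * Cmod w * (Cmod z * Cmod w)) with ((Cmod z * Cmod z) * (Cmod w * Cmod w)) by ring.
    rewrite Hz, Hw. pose proof (Rle_0_sqr (Re z * Im w - Im z * Re w)) as Hq; unfold Rsqr in Hq; nra. }
  nra.
Qed.

Lemma Cmod_mul z w : Cmod (Cmul z w) = Cmod z * Cmod w.
Proof.
  unfold Cmod. rewrite <- sqrt_mult by nra. f_equal. simpl. ring.
Qed.

Lemma Cmod_sub_sym z w : Cmod (Csub z w) = Cmod (Csub w z).
Proof. unfold Cmod; simpl. f_equal. ring. Qed.

Lemma Cmod_sub_tri z w v : Cmod (Csub z v) <= Cmod (Csub z w) + Cmod (Csub w v).
Proof.
  replace (Csub z v) with (Cadd (Csub z w) (Csub w v)) by (apply Ceq; simpl; ring).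
  apply Cmod_triangle.
Qed.


Definition emb (u : nat -> R) : nat -> Cplx := fun n => mkC (u n) 0.

Lemma A_ext (A : (nat -> Cplx) -> Prop) f g : A f -> (forall n, f n = g n) -> A g.
Proof. intros H E. replace g with f; auto. apply functional_extensionality; auto. Qed.

Lemma A_const A c : unital_Cstar_subalgebra A -> A (fun _ => c).
Proof.
  intros HA. eapply A_ext. apply (cs_scal A HA c _ (cs_unit A HA)).
  intros n; apply Ceq; simpl; ring.
Qed.

Lemma RA_const A c : unital_Cstar_subalgebra A -> A (emb (fun _ => c)).
Proof. intros HA. exact (A_const A (mkC c 0) HA). Qed.

Lemma RA_add A u v : unital_Cstar_subalgebra A -> A (emb u) -> A (emb v) ->
  A (emb (fun n => u n + v n)).
Proof.
  intros HA Hu Hv. eapply A_ext. apply (cs_add A HA _ _ Hu Hv).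
  intros n; apply Ceq; unfold emb; simpl; ring.
Qed.

Lemma RA_mul A u v : unital_Cstar_subalgebra A -> A (emb u) -> A (emb v) ->
  A (emb (fun n => u n * v n)).
Proof.
  intros HA Hu Hv. eapply A_ext. apply (cs_mul A HA _ _ Hu Hv).
  intros n; apply Ceq; unfold emb; simpl; ring.
Qed.

Lemma RA_scal A c u : unital_Cstar_subalgebra A -> A (emb u) ->
  A (emb (fun n => c * u n)).
Proof.
  intros HA Hu. eapply A_ext. apply (cs_scal A HA (mkC c 0) _ Hu).
  intros n; apply Ceq; unfold emb; simpl; ring.
Qed.

Lemma RA_sub A u v : unital_Cstar_subalgebra A -> A (emb u) -> A (emb v) ->
  A (emb (fun n => u n - v n)).
Proof.
  intros HA Hu Hv. eapply A_ext. apply (RA_add A _ _ HA Hu (RA_scal A (-1) v HA Hv)).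
  intros n; apply Ceq; unfold emb; simpl; ring.
Qed.

Lemma RA_Re A g : unital_Cstar_subalgebra A -> A g -> A (emb (fun n => Re (g n))).
Proof.
  intros HA Hg. eapply A_ext.
  apply (cs_scal A HA (mkC (1/2) 0) _ (cs_add A HA _ _ Hg (cs_conj A HA _ Hg))).
  intros n; apply Ceq; unfold emb; simpl; field.
Qed.

Lemma RA_Im A g : unital_Cstar_subalgebra A -> A g -> A (emb (fun n => Im (g n))).
Proof.
  intros HA Hg. eapply A_ext.
  apply (cs_scal A HA (mkC 0 (-1/2)) _ (cs_add A HA _ _ Hg
     (cs_scal A HA (mkC (-1) 0) _ (cs_conj A HA _ Hg)))).
  intros n; apply Ceq; unfold emb; simpl; field.
Qed.

Lemma bounded_A A g : unital_Cstar_subalgebra A -> A g ->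
  exists M, 0 < M /\ forall n, Cmod (g n) <= M.
Proof.
  intros HA Hg. destruct (cs_bounded A HA g Hg) as [M HM].
  exists (Rmax 1 M). split. pose proof (Rmax_l 1 M); lra.
  intros n. eapply Rle_trans. apply HM. apply Rmax_r.
Qed.

Lemma bounded_RA A u : unital_Cstar_subalgebra A -> A (emb u) ->
  exists M, 0 < M /\ forall n, Rabs (u n) <= M.
Proof.
  intros HA Hu. destruct (bounded_A A _ HA Hu) as [M [HM0 HM]].
  exists M; split; auto. intros n. rewrite <- Cmod_real. apply HM.
Qed.

Lemma iota_char A n : unital_Cstar_subalgebra A -> character A (iota n).
Proof.
  intros HA. split; try reflexivity.
  exists (fun _ => Defs.C1). split. apply cs_unit; auto.
  unfold iota, Defs.C1, Defs.C0. intros H. injection H. lra.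
Qed.

Lemma forward A : unital_Cstar_subalgebra A -> shift_invariant A ->
   exists T : ((nat -> Cplx) -> Cplx) -> ((nat -> Cplx) -> Cplx),
     maps_X_to_X A T /\ weakstar_continuous A T /\ extends_shift A T.
Proof.
  intros HA Hs. exists (fun phi f => phi (shift f)). split; [|split].
  - intros phi Hphi. split.
    + intros f g Hf Hg. apply (ch_add A phi Hphi); apply Hs; auto.
    + intros c f Hf. apply (ch_scal A phi Hphi c (shift f)); apply Hs; auto.
    + intros f g Hf Hg. apply (ch_mul A phi Hphi); apply Hs; auto.
    + destruct (ch_nonzero A phi Hphi) as [f [Hf Hpf]].
      exists (fun _ => Defs.C1). split. apply cs_unit; auto.
      unfold shift. intros H0. apply Hpf.
      pose proof (ch_mul A phi Hphi _ _ (cs_unit A HA) Hf) as E. cbv beta in E, H0.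
      replace (fun n => Cmul Defs.C1 (f n)) with f in E
        by (apply functional_extensionality; intros; apply Ceq; simpl; ring).
      rewrite E, H0. apply Ceq; simpl; ring.
  - intros phi Hphi f Hf eps Heps. exists (shift f :: nil), eps.
    split; [exact Heps|split].
    + constructor. apply Hs; exact Hf. constructor.
    + intros psi Hpsi Hg. apply Hg. left; auto.
  - intros n f Hf. reflexivity.
Qed.


Record isU {T : Type} (U : (T -> Prop) -> Prop) : Prop := {
  uS : forall S1 S2 : T -> Prop, U S1 -> (forall x, S1 x -> S2 x) -> U S2;
  uI : forall S1 S2 : T -> Prop, U S1 -> U S2 -> U (fun x => S1 x /\ S2 x);
  uN : forall S : T -> Prop, U S -> exists x, S x;
  uC : forall S : T -> Prop, U S \/ U (fun x => ~ S x);
  uT : U (fun _ => True) }.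

Lemma Rabs_le_e x M : Rabs x <= M -> -M <= x <= M.
Proof. unfold Rabs; destruct (Rcase_abs x); lra. Qed.
Lemma Rabs_lt_i x M : -M < x < M -> Rabs x < M.
Proof. unfold Rabs; destruct (Rcase_abs x); lra. Qed.

Definition conv {T} (U : (T -> Prop) -> Prop) (h : T -> R) (L : R) : Prop :=
  forall eta, 0 < eta -> U (fun x => Rabs (h x - L) < eta).

Lemma conv_unique T (U : (T -> Prop) -> Prop) h L1 L2 :
  isU U -> conv U h L1 -> conv U h L2 -> L1 = L2.
Proof.
  intros HU H1 H2. apply NNPP; intros Hne.
  assert (He : 0 < Rabs (L1 - L2) / 2).
  { assert (L1 - L2 <> 0) by lra. pose proof (Rabs_pos_lt _ H). lra. }
  destruct (uN U HU _ (uI U HU _ _ (H1 _ He) (H2 _ He))) as [x [Hx1 Hx2]].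
  assert (Rabs (L1 - L2) <= Rabs (h x - L1) + Rabs (h x - L2)).
  { replace (L1 - L2) with (-(h x - L1) + (h x - L2)) by ring.
    eapply Rle_trans. apply Rabs_triang. rewrite Rabs_Ropp. lra. }
  lra.
Qed.

Lemma conv_exists T (U : (T -> Prop) -> Prop) h M :
  isU U -> (forall x, Rabs (h x) <= M) -> exists L, conv U h L.
Proof.
  intros HU HM.
  set (E := fun y => U (fun t => y <= h t)).
  assert (Hb : bound E).
  { exists M. intros y Hy. destruct (Rle_or_lt y M); auto.
    destruct (uN U HU _ Hy) as [t Ht]. pose proof (HM t).
    apply Rabs_le_e in H0. lra. }
  assert (Hne : exists y, E y).
  { exists (-M). apply (uS U HU _ _ (uT U HU)). intros t _.
    pose proof (HM t). apply Rabs_le_e in H. lra. }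
  destruct (completeness E Hb Hne) as [L [HL1 HL2]].
  exists L. intros eta Heta.
  assert (Ha : exists y, E y /\ L - eta < y).
  { apply NNPP; intros Hn. assert (L <= L - eta); [|lra].
    apply HL2. intros y Hy. destruct (Rle_or_lt y (L - eta)); auto.
    exfalso; apply Hn; exists y; auto. }
  destruct Ha as [y [Hy Hly]].
  assert (Hc : ~ E (L + eta / 2)).
  { intros Hc. pose proof (HL1 _ Hc). lra. }
  destruct (uC U HU (fun t => L + eta / 2 <= h t)) as [Hd | Hd]; [contradiction|].
  apply (uS U HU _ _ (uI U HU _ _ Hy Hd)). intros t [H1 H2].
  apply Rabs_lt_i; lra.
Qed.

Lemma conv_const T (U : (T -> Prop) -> Prop) c : isU U -> conv U (fun _ => c) c.
Proof.
  intros HU eta Heta. apply (uS U HU _ _ (uT U HU)). intros t _.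
  replace (c - c) with 0 by ring. rewrite Rabs_R0; auto.
Qed.

Lemma conv_lin T (U : (T -> Prop) -> Prop) a b h1 h2 L1 L2 : isU U ->
  conv U h1 L1 -> conv U h2 L2 ->
  conv U (fun x => a * h1 x + b * h2 x) (a * L1 + b * L2).
Proof.
  intros HU H1 H2 eta Heta.
  set (e := eta / (Rabs a + Rabs b + 1)).
  assert (He : 0 < e).
  { unfold e. apply Rdiv_lt_0_compat; auto. pose proof (Rabs_pos a); pose proof (Rabs_pos b); lra. }
  apply (uS U HU _ _ (uI U HU _ _ (H1 e He) (H2 e He))). intros t [Ht1 Ht2].
  replace (a * h1 t + b * h2 t - (a * L1 + b * L2)) with (a * (h1 t - L1) + b * (h2 t - L2)) by ring.
  eapply Rle_lt_trans. apply Rabs_triang. rewrite !Rabs_mult.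
  assert (eta = (Rabs a + Rabs b + 1) * e).
  { unfold e. field. pose proof (Rabs_pos a); pose proof (Rabs_pos b); lra. }
  pose proof (Rabs_pos a); pose proof (Rabs_pos b).
  pose proof (Rmult_le_compat_l (Rabs a) _ _ H0 (Rlt_le _ _ Ht1)).
  pose proof (Rmult_le_compat_l (Rabs b) _ _ H3 (Rlt_le _ _ Ht2)).
  nra.
Qed.

Lemma conv_mul T (U : (T -> Prop) -> Prop) h1 h2 L1 L2 M : isU U ->
  (forall x, Rabs (h1 x) <= M) ->
  conv U h1 L1 -> conv U h2 L2 ->
  conv U (fun x => h1 x * h2 x) (L1 * L2).
Proof.
  intros HU HM H1 H2 eta Heta.
  assert (HM0 : 0 <= M).
  { destruct (uN U HU _ (uT U HU)) as [x _]. pose proof (HM x); pose proof (Rabs_pos (h1 x)); lra. }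
  set (e := eta / (M + Rabs L2 + 1)).
  assert (He : 0 < e).
  { unfold e. apply Rdiv_lt_0_compat; auto. pose proof (Rabs_pos L2); lra. }
  apply (uS U HU _ _ (uI U HU _ _ (H1 e He) (H2 e He))). intros t [Ht1 Ht2].
  replace (h1 t * h2 t - L1 * L2) with (h1 t * (h2 t - L2) + L2 * (h1 t - L1)) by ring.
  eapply Rle_lt_trans. apply Rabs_triang. rewrite !Rabs_mult.
  assert (eta = (M + Rabs L2 + 1) * e).
  { unfold e. field. pose proof (Rabs_pos L2); lra. }
  pose proof (Rabs_pos L2); pose proof (Rabs_pos (h1 t)); pose proof (Rabs_pos (h2 t - L2)).
  pose proof (HM t).
  pose proof (Rmult_le_compat _ _ _ _ H3 H4 H5 (Rlt_le _ _ Ht2)).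
  pose proof (Rmult_le_compat_l (Rabs L2) _ _ H0 (Rlt_le _ _ Ht1)).
  nra.
Qed.

Lemma conv_close T (U : (T -> Prop) -> Prop) h1 h2 L : isU U ->
  conv U h1 L -> (forall eta, 0 < eta -> U (fun x => Rabs (h1 x - h2 x) < eta)) ->
  conv U h2 L.
Proof.
  intros HU H1 H2 eta Heta.
  apply (uS U HU _ _ (uI U HU _ _ (H1 (eta/2) ltac:(lra)) (H2 (eta/2) ltac:(lra)))).
  intros t [Ht1 Ht2].
  replace (h2 t - L) with ((h1 t - L) - (h1 t - h2 t)) by ring.
  eapply Rle_lt_trans. apply Rabs_triang. rewrite Rabs_Ropp. lra.
Qed.

Definition ulim {T} (U : (T -> Prop) -> Prop) (h : T -> R) : R :=
  epsilon (inhabits 0) (fun L => conv U h L).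

Lemma ulim_conv T (U : (T -> Prop) -> Prop) h M :
  isU U -> (forall x, Rabs (h x) <= M) -> conv U h (ulim U h).
Proof.
  intros HU HM. unfold ulim. apply epsilon_spec. eapply conv_exists; eauto.
Qed.

Lemma ulim_eq T (U : (T -> Prop) -> Prop) h L :
  isU U -> conv U h L -> ulim U h = L.
Proof.
  intros HU H. eapply conv_unique; eauto. unfold ulim. apply epsilon_spec. eauto.
Qed.


Lemma RA_ext (A : (nat -> Cplx) -> Prop) u v : A (emb u) -> (forall n, u n = v n) -> A (emb v).
Proof. intros H E. apply (A_ext A (emb u) (emb v) H). intros n; unfold emb; rewrite E; auto. Qed.

Lemma Cmod_sub_emb a b : Cmod (Csub (mkC a 0) (mkC b 0)) = Rabs (a - b).
Proof.
  rewrite <- Cmod_real. f_equal. apply Ceq; simpl; ring.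
Qed.

Fixpoint qk (k : nat) (t : R) : R :=
  match k with 0 => 0 | S k => qk k t + (t - qk k t * qk k t) / 2 end.

Lemma pow_01 x k : 0 <= x <= 1 -> 0 <= x ^ k <= 1.
Proof.
  intros H; induction k; simpl. lra. nra.
Qed.

Lemma qk_bound k t : 0 <= t <= 1 ->
  0 <= sqrt t - qk k t <= sqrt t * (1 - sqrt t / 2) ^ k.
Proof.
  intros Ht. set (s := sqrt t).
  assert (Hs : s * s = t) by (apply sqrt_sqrt; lra).
  assert (Hs0 : 0 <= s) by apply sqrt_pos.
  assert (Hs1 : s <= 1).
  { unfold s. rewrite <- sqrt_1. apply sqrt_le_1_alt; lra. }
  induction k; simpl.
  - lra.
  - fold s in IHk. pose proof (pow_01 (1 - s/2) k ltac:(lra)) as Hp.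
    set (q := qk k t) in *. set (P := (1 - s/2)^k) in *.
    assert (Hq : 0 <= q <= s) by nra.
    rewrite <- Hs.
    replace (s - (q + (s * s - q * q) / 2)) with ((s - q) * (1 - (s + q)/2)) by field.
    split. nra.
    assert (0 <= 1 - (s + q)/2 <= 1 - s/2) by nra.
    replace (s * ((1 - s / 2) * P)) with ((s * P) * (1 - s/2)) by ring.
    apply Rmult_le_compat; lra.
Qed.

Lemma qk_unif eta : 0 < eta -> exists k, forall t, 0 <= t <= 1 -> sqrt t - qk k t <= eta.
Proof.
  intros Heta. set (e := Rmin eta 1).
  assert (He : 0 < e <= 1 /\ e <= eta).
  { unfold e, Rmin; destruct (Rle_dec eta 1); lra. }
  destruct (pow_lt_1_zero (1 - e/2) ltac:(apply Rabs_lt_i; lra) e ltac:(lra)) as [N HN].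
  exists N. intros t Ht. destruct (qk_bound N t Ht) as [_ Hb].
  set (s := sqrt t) in *.
  assert (Hs0 : 0 <= s) by apply sqrt_pos.
  assert (Hs1 : s <= 1).
  { unfold s. rewrite <- sqrt_1. apply sqrt_le_1_alt; lra. }
  pose proof (pow_01 (1 - s/2) N ltac:(lra)) as Hp.
  destruct (Rle_or_lt s e).
  - nra.
  - assert ((1 - s/2)^N <= (1 - e/2)^N) by (apply pow_incr; lra).
    pose proof (HN N (le_n N)). rewrite Rabs_right in H1.
    2: { apply Rle_ge, pow_le; lra. }
    nra.
Qed.

Lemma RA_abs A u : unital_Cstar_subalgebra A -> A (emb u) ->
  A (emb (fun n => Rabs (u n))).
Proof.
  intros HA Hu. destruct (bounded_RA A u HA Hu) as [M [HM0 HM]].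
  set (w := fun n => (u n / M) * (u n / M)).
  assert (Hw : A (emb w)).
  { unfold w. apply RA_mul; auto.
    all: apply (RA_ext A _ _ (RA_scal A (/M) u HA Hu)); intros n; unfold Rdiv; ring. }
  assert (Hw01 : forall n, 0 <= w n <= 1).
  { intros n. pose proof (Rabs_le_e _ _ (HM n)).
    assert (-1 <= u n / M <= 1).
    { unfold Rdiv. split.
      - apply (Rmult_le_reg_r M); auto. rewrite Rmult_assoc, Rinv_l by lra. lra.
      - apply (Rmult_le_reg_r M); auto. rewrite Rmult_assoc, Rinv_l by lra. lra. }
    unfold w; nra. }
  assert (Hq : forall k, A (emb (fun n => qk k (w n)))).
  { induction k; simpl.
    - apply RA_const; auto.
    - apply (RA_ext A (fun n => qk k (w n) + / 2 * (w n - qk k (w n) * qk k (w n)))).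
      + apply RA_add; auto. apply (RA_scal A (/2)); auto.
        apply RA_sub; auto. apply RA_mul; auto.
      + intros n; simpl; unfold Rdiv; ring. }
  apply (cs_closed A HA). intros eps Heps.
  destruct (qk_unif (eps / M) ltac:(apply Rdiv_lt_0_compat; auto)) as [k Hk].
  exists (emb (fun n => M * qk k (w n))). split.
  - apply RA_scal; auto.
  - intros n. unfold emb. rewrite Cmod_sub_emb.
    assert (E : Rabs (u n) = M * sqrt (w n)).
    { unfold w. replace (u n / M * (u n / M)) with (Rsqr (u n / M)) by (unfold Rsqr; ring).
      rewrite sqrt_Rsqr_abs. unfold Rdiv. rewrite Rabs_mult, Rabs_inv, (Rabs_right M) by lra.
      field. lra. }
    rewrite E. destruct (qk_bound k (w n) (Hw01 n)) as [H0 _].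
    pose proof (Hk (w n) (Hw01 n)).
    rewrite Rabs_right by nra.
    replace eps with (M * (eps / M)) by (field; lra). nra.
Qed.

Lemma RA_max0 A u : unital_Cstar_subalgebra A -> A (emb u) ->
  A (emb (fun n => Rmax 0 (u n))).
Proof.
  intros HA Hu. apply (RA_ext A (fun n => /2 * (u n + Rabs (u n)))).
  - apply (RA_scal A (/2)); auto. apply RA_add; auto. apply RA_abs; auto.
  - intros n; simpl. unfold Rmax, Rabs. destruct (Rle_dec 0 (u n)); destruct (Rcase_abs (u n)); lra.
Qed.

Lemma RA_min1 A u : unital_Cstar_subalgebra A -> A (emb u) ->
  A (emb (fun n => Rmin 1 (u n))).
Proof.
  intros HA Hu.
  assert (H1 : A (emb (fun n => 1 - u n))) by (apply RA_sub; auto; apply RA_const; auto).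
  apply (RA_ext A (fun n => /2 * ((1 + u n) - Rabs (1 - u n)))).
  - apply (RA_scal A (/2)); auto. apply RA_sub; auto. apply RA_add; auto.
    apply RA_const; auto. apply RA_abs; [auto | exact H1].
  - intros n; simpl. unfold Rmin, Rabs. destruct (Rle_dec 1 (u n)); destruct (Rcase_abs (1 - u n)); lra.
Qed.


Lemma ultra_ex (T : Type) (B : (T -> Prop) -> Prop) :
  (exists b, B b) ->
  (forall b1 b2, B b1 -> B b2 -> exists b3, B b3 /\ forall x, b3 x -> b1 x /\ b2 x) ->
  (forall b, B b -> exists x, b x) ->
  exists U : (T -> Prop) -> Prop, isU U /\ (forall b, B b -> U b).
Proof.
  intros [b0 Hb0] HI HN.
  set (F := fun S : T -> Prop => exists b, B b /\ forall x, b x -> S x).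
  assert (FF : filter.ProperFilter F).
  { apply filter.Build_ProperFilter.
    - intros [b [Hb Hs]]. destruct (HN b Hb) as [x Hx]. exact (Hs x Hx).
    - apply filter.Build_Filter.
      + exists b0. split; auto. intros; exact I.
      + intros P Q [b1 [H1 S1]] [b2 [H2 S2]]. destruct (HI b1 b2 H1 H2) as [b3 [H3 S3]].
        exists b3; split; auto. intros x Hx; destruct (S3 x Hx); split; auto.
      + intros P Q PQ [b [Hb S]]. exists b; split; auto. }
  destruct (filter.ultraFilterLemma FF) as [G [GU FG]].
  exists G. split.
  - split.
    + intros S1 S2 H1 H12. eapply (@filter.filterS _ G); [| exact H12 | exact H1]. exact _.
    + intros S1 S2 H1 H2. exact (@filter.filterI _ G _ S1 S2 H1 H2).
    + intros S HS. exact (@filter.filter_ex _ G _ S HS).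
    + intros S. destruct (filter.in_ultra_setVsetC S GU); auto.
    + apply FG. exists b0. split; auto.
  - intros b Hb. apply FG. exists b; split; auto.
Qed.


Definition Dsum (rs : list (nat -> R)) (p n : nat) : R :=
  fold_right (fun r acc => Rabs (r n - r p) + acc) 0 rs.

Lemma Dsum_nonneg rs p n : 0 <= Dsum rs p n.
Proof. induction rs; simpl. lra. pose proof (Rabs_pos (a n - a p)); lra. Qed.

Lemma Dsum_le rs p n r : In r rs -> Rabs (r n - r p) <= Dsum rs p n.
Proof.
  induction rs; simpl. tauto. intros [->|H].
  - pose proof (Dsum_nonneg rs p n); lra.
  - pose proof (IHrs H); pose proof (Rabs_pos (a n - a p)); lra.
Qed.

Lemma Dsum_small rs p n e : (forall r, In r rs -> Rabs (r n - r p) < e) ->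
  Dsum rs p n <= INR (length rs) * e.
Proof.
  induction rs; intros H. simpl; lra.
  change (Dsum (a :: rs) p n) with (Rabs (a n - a p) + Dsum rs p n).
  change (length (a :: rs)) with (S (length rs)). rewrite S_INR. pose proof (H a (or_introl eq_refl)).
  pose proof (IHrs (fun r Hr => H r (or_intror Hr))). lra.
Qed.

Lemma RA_Dsum A rs p : unital_Cstar_subalgebra A -> Forall (fun r => A (emb r)) rs ->
  A (emb (fun n => Dsum rs p n)).
Proof.
  intros HA Hrs. induction Hrs; simpl.
  - apply RA_const; auto.
  - apply RA_add; auto. apply RA_abs; auto. apply RA_sub; auto. apply RA_const; auto.
Qed.

Lemma U_list T (U : (T -> Prop) -> Prop) (rs : list (nat -> R)) (S : (nat -> R) -> T -> Prop) :
  isU U -> (forall r, In r rs -> U (S r)) -> U (fun x => forall r, In r rs -> S r x).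
Proof.
  intros HU. induction rs; intros H.
  - apply (uS U HU _ _ (uT U HU)). intros x _ r [].
  - apply (uS U HU _ _ (uI U HU _ _ (H a (or_introl eq_refl)) (IHrs (fun r Hr => H r (or_intror Hr))))).
    intros x [H1 H2] r [<-|Hr]; auto.
Qed.

Fixpoint lst (ch : list nat -> nat) (k : nat) : list nat :=
  match k with 0 => nil | S k => ch (lst ch k) :: lst ch k end.

Lemma lst_in ch i j : (i < j)%nat -> In (ch (lst ch i)) (lst ch j).
Proof.
  induction j; intros H. lia. simpl. destruct (Nat.eq_dec i j) as [->|Hne]. left; auto.
  right. apply IHj. lia.
Qed.

Lemma cover A rs d : unital_Cstar_subalgebra A -> Forall (fun r => A (emb r)) rs -> 0 < d ->
  exists P : list nat, forall n, exists p, In p P /\ Dsum rs p n < d.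
Proof.
  intros HA Hrs Hd. apply NNPP; intros Hn.
  assert (Hc : forall P, exists n, forall p, In p P -> d <= Dsum rs p n).
  { intros P. apply NNPP; intros H1. apply Hn. exists P. intros n.
    apply NNPP; intros H2. apply H1. exists n. intros p Hp.
    apply Rnot_lt_le. intros H3. apply H2. exists p; auto. }
  set (ch := fun P => epsilon (inhabits 0%nat) (fun n => forall p, In p P -> d <= Dsum rs p n)).
  assert (Hch : forall P p, In p P -> d <= Dsum rs p (ch P)).
  { intros P. unfold ch. apply (epsilon_spec (inhabits 0%nat) (fun n => forall p, In p P -> d <= Dsum rs p n)). apply Hc. }
  set (s := fun k => ch (lst ch k)).
  assert (Hsep : forall i j, (i < j)%nat -> d <= Dsum rs (s i) (s j)).
  { intros i j Hij. apply Hch. apply lst_in; auto. }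
  destruct (ultra_ex nat (fun b => exists N, b = fun k => (N <= k)%nat)) as [U [HU HB]].
  { exists (fun k => (0 <= k)%nat). exists 0%nat. reflexivity. }
  { intros b1 b2 [N1 ->] [N2 ->]. exists (fun k => (Nat.max N1 N2 <= k)%nat). split;
    [exists (Nat.max N1 N2); reflexivity | intros x Hx; split; lia]. }
  { intros b [N ->]. exists N. lia. }
  set (e := d / (2 * (INR (length rs) + 1))).
  assert (He : 0 < e).
  { unfold e. apply Rdiv_lt_0_compat; auto. pose proof (pos_INR (length rs)); lra. }
  set (W := fun k => forall r, In r rs -> Rabs (r (s k) - ulim U (fun k => r (s k))) < e).
  assert (HW : U W).
  { apply (U_list nat U rs (fun r k => Rabs (r (s k) - ulim U (fun k => r (s k))) < e) HU).
    intros r Hr. rewrite Forall_forall in Hrs.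
    destruct (bounded_RA A r HA (Hrs r Hr)) as [M [_ HM]].
    apply (ulim_conv nat U (fun k => r (s k)) M HU); auto. }
  destruct (uN U HU W HW) as [k1 Hk1].
  destruct (uN U HU _ (uI U HU _ _ HW (HB (fun k => (S k1 <= k)%nat) (ex_intro _ (S k1) eq_refl)))) as [k2 [Hk2 Hlt]].
  pose proof (Hsep k1 k2 Hlt).
  assert (Dsum rs (s k1) (s k2) <= INR (length rs) * (2 * e)).
  { apply Dsum_small. intros r Hr. pose proof (Hk1 r Hr); pose proof (Hk2 r Hr).
    set (L := ulim U (fun k => r (s k))) in *.
    replace (r (s k2) - r (s k1)) with ((r (s k2) - L) - (r (s k1) - L)) by ring.
    eapply Rle_lt_trans. apply Rabs_triang. rewrite Rabs_Ropp. lra. }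
  assert (INR (length rs) * (2 * e) < d).
  { unfold e. pose proof (pos_INR (length rs)).
    replace (INR (length rs) * (2 * (d / (2 * (INR (length rs) + 1)))))
      with (d * (INR (length rs) / (INR (length rs) + 1))) by (field; lra).
    assert (INR (length rs) / (INR (length rs) + 1) < 1).
    { apply (Rmult_lt_reg_r (INR (length rs) + 1)). lra. field_simplify; lra. }
    nra. }
  lra.
Qed.


Definition phiw (rs : list (nat -> R)) (d : R) (p n : nat) : R :=
  Rmin 1 (Rmax 0 ((d - Dsum rs p n) * (2 / d))).

Fixpoint Gf (rs : list (nat -> R)) (d : R) (F : nat -> Cplx) (P : list nat) (n : nat) : Cplx :=
  match P with
  | nil => Defs.C0
  | p :: P' => Cadd (Cmul (mkC (phiw rs d p n) 0) (F p))
                    (Cmul (mkC (1 - phiw rs d p n) 0) (Gf rs d F P' n))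
  end.

Lemma phiw_01 rs d p n : 0 <= phiw rs d p n <= 1.
Proof. unfold phiw, Rmin, Rmax. repeat destruct Rle_dec; lra. Qed.

Lemma phiw_one rs d p n : 0 < d -> Dsum rs p n < d / 2 -> phiw rs d p n = 1.
Proof.
  intros Hd H. unfold phiw.
  assert (1 < (d - Dsum rs p n) * (2 / d)).
  { apply (Rmult_lt_reg_r (d/2)). lra. replace ((d - Dsum rs p n) * (2 / d) * (d / 2)) with (d - Dsum rs p n) by (field; lra). lra. }
  unfold Rmin, Rmax. repeat destruct Rle_dec; lra.
Qed.

Lemma phiw_pos rs d p n : 0 < d -> 0 < phiw rs d p n -> Dsum rs p n < d.
Proof.
  intros Hd H. unfold phiw in H. unfold Rmin, Rmax in H.
  destruct (Rle_dec 0 ((d - Dsum rs p n) * (2 / d))) as [H1|H1].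
  - destruct (Rlt_or_le (Dsum rs p n) d) as [|H2]; auto. exfalso.
    assert ((d - Dsum rs p n) * (2 / d) <= 0).
    { assert (0 < 2 / d) by (apply Rdiv_lt_0_compat; lra). nra. }
    destruct Rle_dec; lra.
  - destruct Rle_dec; lra.
Qed.

Lemma approx A (F : nat -> Cplx) rs d eps P : unital_Cstar_subalgebra A ->
  Forall (fun r => A (emb r)) rs -> 0 < d -> 0 <= eps ->
  (forall p n, Dsum rs p n < d -> Cmod (Csub (F n) (F p)) <= eps) ->
  (forall n, exists p, In p P /\ Dsum rs p n < d / 2) ->
  exists g, A g /\ forall n, Cmod (Csub (F n) (g n)) <= eps.
Proof.
  intros HA Hrs Hd Heps HF Hcov.
  assert (Hphi : forall p, A (emb (phiw rs d p))).
  { intros p. unfold phiw. apply RA_min1; auto. apply RA_max0; auto.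
    apply (RA_ext A (fun n => (2 / d) * (d - Dsum rs p n))).
    apply RA_scal; auto. apply RA_sub; auto. apply RA_const; auto. apply RA_Dsum; auto.
    intros n; ring. }
  exists (Gf rs d F P). split.
  - clear Hcov. induction P; simpl.
    + apply A_const; auto.
    + apply cs_add; auto.
      * exact (cs_mul A HA _ _ (Hphi a) (A_const A (F a) HA)).
      * apply cs_mul; auto. apply (RA_sub A (fun _ => 1) (phiw rs d a) HA); auto. apply RA_const; auto.
  - intros n. destruct (Hcov n) as [p0 [Hp0 Hd0]]. clear Hcov.
    induction P as [|p P IH]; [destruct Hp0|].
    simpl. set (t := phiw rs d p n). pose proof (phiw_01 rs d p n) as Ht. fold t in Ht.
    replace (Csub (F n) (Cadd (Cmul (mkC t 0) (F p)) (Cmul (mkC (1 - t) 0) (Gf rs d F P n))))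
      with (Cadd (Cmul (mkC t 0) (Csub (F n) (F p))) (Cmul (mkC (1 - t) 0) (Csub (F n) (Gf rs d F P n))))
      by (apply Ceq; simpl; ring).
    eapply Rle_trans. apply Cmod_triangle. rewrite !Cmod_mul, !Cmod_real.
    rewrite (Rabs_right t) by lra. rewrite (Rabs_right (1 - t)) by lra.
    assert (Htx : t * Cmod (Csub (F n) (F p)) <= t * eps).
    { destruct (Req_dec t 0) as [->|Hne]. lra.
      apply Rmult_le_compat_l. lra. apply HF. apply (phiw_pos rs d p n Hd). fold t; lra. }
    destruct Hp0 as [<-|Hp0].
    + assert (t = 1) by (apply phiw_one; auto). subst t. rewrite H in *.
      pose proof (Cmod_ge0 (Csub (F n) (Gf rs d F P n))). nra.
    + pose proof (IH Hp0). nra.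
Qed.


Lemma conv_ext T (U : (T -> Prop) -> Prop) h h' L L' : isU U ->
  (forall x, h x = h' x) -> L = L' -> conv U h L -> conv U h' L'.
Proof.
  intros HU E EL H eta Heta. apply (uS U HU _ _ (H eta Heta)). intros x Hx. rewrite <- E, <- EL; auto.
Qed.

Lemma U_listg T X (U : (T -> Prop) -> Prop) (l : list X) (S : X -> T -> Prop) :
  isU U -> (forall r, In r l -> U (S r)) -> U (fun x => forall r, In r l -> S r x).
Proof.
  intros HU. induction l; intros H.
  - apply (uS U HU _ _ (uT U HU)). intros x _ r [].
  - apply (uS U HU _ _ (uI U HU _ _ (H a (or_introl eq_refl)) (IHl (fun r Hr => H r (or_intror Hr))))).
    intros x [H1 H2] r [<-|Hr]; auto.
Qed.

Lemma Cmod_le_sub z w : Cmod (Csub z w) <= Rabs (Re z - Re w) + Rabs (Im z - Im w).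
Proof. apply (Cmod_le_ReIm (Csub z w)). Qed.

Lemma uniform A T f eps : unital_Cstar_subalgebra A -> maps_X_to_X A T ->
  weakstar_continuous A T -> extends_shift A T -> A f -> 0 < eps ->
  exists gs d, Forall A gs /\ 0 < d /\ forall m n,
    (forall g, In g gs -> Cmod (Csub (g m) (g n)) < d) ->
    Cmod (Csub (f (S m)) (f (S n))) < eps.
Proof.
  intros HA HX Hc He Hf Heps. apply NNPP; intros Hn.
  assert (H : forall gs d, Forall A gs -> 0 < d -> exists m n,
     (forall g, In g gs -> Cmod (Csub (g m) (g n)) < d) /\
     ~ Cmod (Csub (f (S m)) (f (S n))) < eps).
  { intros gs d Hgs Hd. apply NNPP; intros H1. apply Hn. exists gs, d. split; auto. split; auto.
    intros m n Hmn. apply NNPP; intros H2. apply H1. exists m, n. auto. }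
  set (bs := fun gs d => fun pr : nat * nat =>
     (forall g, In g gs -> Cmod (Csub (g (fst pr)) (g (snd pr))) < d) /\
     ~ Cmod (Csub (f (S (fst pr))) (f (S (snd pr)))) < eps).
  destruct (ultra_ex (nat * nat) (fun b => exists gs d, Forall A gs /\ 0 < d /\ b = bs gs d))
    as [U [HU HB]].
  { exists (bs nil 1). exists nil, 1. split; [constructor|split; [lra|reflexivity]]. }
  { intros b1 b2 [gs1 [d1 [H1 [Hd1 ->]]]] [gs2 [d2 [H2 [Hd2 ->]]]].
    exists (bs (gs1 ++ gs2) (Rmin d1 d2)). split.
    - exists (gs1 ++ gs2), (Rmin d1 d2). split; [apply Forall_app; auto|split; [|reflexivity]].
      unfold Rmin; destruct Rle_dec; lra.
    - intros x [Hx1 Hx2]. unfold bs; split; split; auto; intros g Hg.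
      + eapply Rlt_le_trans. apply Hx1. apply in_or_app; auto. apply Rmin_l.
      + eapply Rlt_le_trans. apply Hx1. apply in_or_app; auto. apply Rmin_r. }
  { intros b [gs [d [Hgs [Hd ->]]]]. destruct (H gs d Hgs Hd) as [m [n Hmn]].
    exists (m, n). exact Hmn. }
  set (phi := fun h : nat -> Cplx =>
     mkC (ulim U (fun pr => Re (h (fst pr)))) (ulim U (fun pr => Im (h (fst pr))))).
  assert (HcRe : forall g, A g -> conv U (fun pr => Re (g (fst pr))) (Re (phi g))).
  { intros g Hg. destruct (bounded_A A g HA Hg) as [M [_ HM]].
    apply (ulim_conv _ U _ M HU). intros x. eapply Rle_trans. apply Re_le_Cmod. apply HM. }
  assert (HcIm : forall g, A g -> conv U (fun pr => Im (g (fst pr))) (Im (phi g))).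
  { intros g Hg. destruct (bounded_A A g HA Hg) as [M [_ HM]].
    apply (ulim_conv _ U _ M HU). intros x. eapply Rle_trans. apply Im_le_Cmod. apply HM. }
  assert (HbRe : forall g, A g -> exists M, forall x : nat * nat, Rabs (Re (g (fst x))) <= M).
  { intros g Hg. destruct (bounded_A A g HA Hg) as [M [_ HM]]. exists M.
    intros x. eapply Rle_trans. apply Re_le_Cmod. apply HM. }
  assert (HbIm : forall g, A g -> exists M, forall x : nat * nat, Rabs (Im (g (fst x))) <= M).
  { intros g Hg. destruct (bounded_A A g HA Hg) as [M [_ HM]]. exists M.
    intros x. eapply Rle_trans. apply Im_le_Cmod. apply HM. }
  assert (Hphi : character A phi).
  { split.
    - intros g h Hg Hh. apply Ceq; unfold phi; simpl; apply ulim_eq; auto.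
      + eapply conv_ext; [exact HU| | |apply (conv_lin _ U 1 1 _ _ _ _ HU (HcRe g Hg) (HcRe h Hh))];
        intros; simpl; ring.
      + eapply conv_ext; [exact HU| | |apply (conv_lin _ U 1 1 _ _ _ _ HU (HcIm g Hg) (HcIm h Hh))];
        intros; simpl; ring.
    - intros c g Hg. apply Ceq; unfold phi; simpl; apply ulim_eq; auto.
      + eapply conv_ext; [exact HU| | |apply (conv_lin _ U (Re c) (- Im c) _ _ _ _ HU (HcRe g Hg) (HcIm g Hg))];
        intros; simpl; ring.
      + eapply conv_ext; [exact HU| | |apply (conv_lin _ U (Re c) (Im c) _ _ _ _ HU (HcIm g Hg) (HcRe g Hg))];
        intros; simpl; ring.
    - intros g h Hg Hh. destruct (HbRe g Hg) as [M1 HM1]. destruct (HbIm g Hg) as [M2 HM2].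
      apply Ceq; unfold phi; simpl; apply ulim_eq; auto.
      + eapply conv_ext; [exact HU| | |apply (conv_lin _ U 1 (-1) _ _ _ _ HU
            (conv_mul _ U _ _ _ _ M1 HU HM1 (HcRe g Hg) (HcRe h Hh))
            (conv_mul _ U _ _ _ _ M2 HU HM2 (HcIm g Hg) (HcIm h Hh)))];
        intros; simpl; ring.
      + eapply conv_ext; [exact HU| | |apply (conv_lin _ U 1 1 _ _ _ _ HU
            (conv_mul _ U _ _ _ _ M1 HU HM1 (HcRe g Hg) (HcIm h Hh))
            (conv_mul _ U _ _ _ _ M2 HU HM2 (HcIm g Hg) (HcRe h Hh)))];
        intros; simpl; ring.
    - exists (fun _ => Defs.C1). split. apply cs_unit; auto.
      assert (E : Re (phi (fun _ => Defs.C1)) = 1).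
      { unfold phi; simpl. apply ulim_eq; auto. apply conv_const; auto. }
      intros E0. rewrite E0 in E. simpl in E. lra. }
  assert (Hsnd : forall g, A g -> forall eta, 0 < eta ->
     U (fun pr => Cmod (Csub (g (fst pr)) (g (snd pr))) < eta)).
  { intros g Hg eta Heta. apply (uS U HU _ _ (HB (bs (g :: nil) eta) (ex_intro _ (g :: nil) (ex_intro _ eta
       (conj (Forall_cons _ Hg (Forall_nil _)) (conj Heta eq_refl)))))).
    intros x [Hx _]. apply Hx. left; auto. }
  assert (HcRe2 : forall g, A g -> conv U (fun pr => Re (g (snd pr))) (Re (phi g))).
  { intros g Hg. apply (conv_close _ U _ _ _ HU (HcRe g Hg)). intros eta Heta.
    apply (uS U HU _ _ (Hsnd g Hg eta Heta)). intros x Hx. eapply Rle_lt_trans; [|exact Hx].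
    apply (Re_le_Cmod (Csub (g (fst x)) (g (snd x)))). }
  assert (HcIm2 : forall g, A g -> conv U (fun pr => Im (g (snd pr))) (Im (phi g))).
  { intros g Hg. apply (conv_close _ U _ _ _ HU (HcIm g Hg)). intros eta Heta.
    apply (uS U HU _ _ (Hsnd g Hg eta Heta)). intros x Hx. eapply Rle_lt_trans; [|exact Hx].
    apply (Im_le_Cmod (Csub (g (fst x)) (g (snd x)))). }
  destruct (Hc phi Hphi f Hf (eps / 2) ltac:(lra)) as [gs0 [d0 [Hd0 [Hgs0 Hcont]]]].
  rewrite Forall_forall in Hgs0.
  assert (HW : U (fun pr => forall g, In g gs0 ->
     Cmod (Csub (iota (fst pr) g) (phi g)) < d0 /\ Cmod (Csub (iota (snd pr) g) (phi g)) < d0)).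
  { apply (U_listg _ _ U gs0 (fun g pr => Cmod (Csub (iota (fst pr) g) (phi g)) < d0 /\
                                        Cmod (Csub (iota (snd pr) g) (phi g)) < d0) HU).
    intros g Hg. pose proof (Hgs0 g Hg) as HAg.
    pose proof (HcRe g HAg _ (ltac:(lra) : 0 < d0 / 2)) as U1.
    pose proof (HcIm g HAg _ (ltac:(lra) : 0 < d0 / 2)) as U2.
    pose proof (HcRe2 g HAg _ (ltac:(lra) : 0 < d0 / 2)) as U3.
    pose proof (HcIm2 g HAg _ (ltac:(lra) : 0 < d0 / 2)) as U4.
    apply (uS U HU _ _ (uI U HU _ _ (uI U HU _ _ U1 U2) (uI U HU _ _ U3 U4))).
    intros x [[H1 H2] [H3 H4]]. unfold iota. split.
    - eapply Rle_lt_trans. apply Cmod_le_sub. simpl in *. lra.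
    - eapply Rle_lt_trans. apply Cmod_le_sub. simpl in *. lra. }
  pose proof (HB (bs nil 1) (ex_intro _ nil (ex_intro _ 1 (conj (Forall_nil _) (conj Rlt_0_1 eq_refl))))) as H0.
  destruct (uN U HU _ (uI U HU _ _ HW H0)) as [[m n] [Hmn [_ Hbad]]].
  simpl in Hmn, Hbad. apply Hbad.
  pose proof (Hcont (iota m) (iota_char A m HA) (fun g Hg => proj1 (Hmn g Hg))) as C1.
  pose proof (Hcont (iota n) (iota_char A n HA) (fun g Hg => proj2 (Hmn g Hg))) as C2.
  rewrite (He m f Hf) in C1. rewrite (He n f Hf) in C2. unfold iota in C1, C2.
  eapply Rle_lt_trans. apply (Cmod_sub_tri _ (T phi f)).
  rewrite (Cmod_sub_sym (T phi f)). lra.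
Qed.


Theorem proposition2p3 (A : (nat -> Cplx) -> Prop) :
  unital_Cstar_subalgebra A ->
  (shift_invariant A <->
   exists T : ((nat -> Cplx) -> Cplx) -> ((nat -> Cplx) -> Cplx),
     maps_X_to_X A T /\ weakstar_continuous A T /\ extends_shift A T).
Proof.
  intros HA. split.
  - apply forward; auto.
  - intros [T [HX [Hc He]]] f Hf. apply (cs_closed A HA). intros eps Heps.
    destruct (uniform A T f eps HA HX Hc He Hf Heps) as [gs [d [Hgs [Hd Hu]]]].
    set (rs := map (fun g n => Re (g n)) gs ++ map (fun g n => Im (g n)) gs).
    assert (Hrs : Forall (fun r => A (emb r)) rs).
    { rewrite Forall_forall in Hgs |- *. intros r Hr. unfold rs in Hr.
      apply in_app_or in Hr. destruct Hr as [Hr|Hr]; apply in_map_iff in Hr;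
      destruct Hr as [g [<- Hg]]. apply RA_Re; auto. apply RA_Im; auto. }
    destruct (cover A rs (d / 2 / 2) HA Hrs ltac:(lra)) as [P HP].
    apply (approx A (shift f) rs (d / 2) eps P HA Hrs ltac:(lra) ltac:(lra)); auto.
    intros p n Hpn. apply Rlt_le. apply Hu. intros g Hg.
    eapply Rle_lt_trans. apply Cmod_le_sub.
    pose proof (Dsum_le rs p n (fun n => Re (g n)) ltac:(apply in_or_app; left; apply (in_map (fun (g : nat -> Cplx) (n : nat) => Re (g n))); auto)).
    pose proof (Dsum_le rs p n (fun n => Im (g n)) ltac:(apply in_or_app; right; apply (in_map (fun (g : nat -> Cplx) (n : nat) => Im (g n))); auto)).
    simpl in *. lra.
Qed.
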